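(* Among the triangle centers $X_1,\dots,X_{29}$, exactly $X_{16}$, $X_{23}$, $X_{26}$ have the property that there exists an acute triangle $ABC$ with $a<b<c$ in which $\mathrm{Atrace}(X_n)$ lies on the extension of $BC$ beyond $C$. For every other $n\le 29$, in every acute triangle with $a<b<c$, $\mathrm{Atrace}(X_n)$ does not lie on the extension of $BC$ beyond $C$.
   Context: $X_n$ denotes the $n$-th triangle center listed in Kimberling's Encyclopedia of Triangle Centers (ETC), given by barycentric coordinates in terms of $a=BC$, $b=CA$, $c=AB$. For a point $P=(p:q:r)\ne A$, $\mathrm{Atrace}(P)$ is the intersection of line $AP$ with line $BC$, namely $(0:q:r)$; it lies on the extension of $BC$ beyond $C$ iff $q(q+r)<0$. *)

(* Defs.v *)
From Stdlib Require Import Reals Lra.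
Open Scope R_scope.

(* Conventions: a = BC, b = CA, c = AB.  A point is given by (homogeneous)
   barycentric coordinates (p, q, r) w.r.t. (A, B, C). *)

(* Conway-type quantity (scaled by 2): SA = b^2 + c^2 - a^2 = 2 bc cos A. *)
Definition SA (a b c : R) : R := b*b + c*c - a*a.

Definition area (a b c : R) : R :=
  sqrt ((a+b+c) * (-a+b+c) * (a-b+c) * (a+b-c)) / 4.

(* Where ETC lists a rational
   expression, the coordinates below are multiplied by a common factor which is
   symmetric in a,b,c and nonzero for every acute triangle. *)
Definition etc_first (n : nat) (a b c : R) : R :=
  let sa := SA a b c in let sb := SA b c a in let sc := SA c a b in
  let D := area a b c in
  match n with
  | 1 => a
  | 2 => 1
  | 3 => a*a * sa
  | 4 => sb * sc                                  (* ETC: 1/SA *)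
  | 5 => a*a*(b*b + c*c) - (b*b - c*c)^2
  | 6 => a*a
  | 7 => (c+a-b) * (a+b-c)                        (* ETC: 1/(b+c-a) *)
  | 8 => b+c-a
  | 9 => a*(b+c-a)
  | 10 => b+c
  | 11 => (b-c)^2 * (b+c-a)
  | 12 => (b+c)^2 * (c+a-b) * (a+b-c)             (* ETC: (b+c)^2/(b+c-a) *)
  | 13 => a^4 - 2*(b*b - c*c)^2 + a*a*(b*b + c*c + 4*sqrt 3 * D)
  | 14 => a^4 - 2*(b*b - c*c)^2 + a*a*(b*b + c*c - 4*sqrt 3 * D)
  | 15 => a*a * (sqrt 3 * sa + 4*D)
  | 16 => a*a * (sqrt 3 * sa - 4*D)
  | 17 => (sb + 4*sqrt 3 * D) * (sc + 4*sqrt 3 * D) (* ETC: 1/(SA + 4 sqrt3 D) *)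
  | 18 => (sb - 4*sqrt 3 * D) * (sc - 4*sqrt 3 * D) (* ETC: 1/(SA - 4 sqrt3 D) *)
  | 19 => a * sb * sc                             (* ETC: a/SA *)
  | 20 => sa*sb + sa*sc - sb*sc
  | 21 => a*(b+c-a)/(b+c)
  | 22 => a*a*(b^4 + c^4 - a^4)
  | 23 => a*a*(b^4 + c^4 - a^4 - b*b*c*c)
  | 24 => a*a*(sa*sa - 2*b*b*c*c) * sb * sc       (* ETC trilinears: sec A cos 2A *)
  | 25 => a*a * sb * sc                           (* ETC: a^2/SA *)
  | 26 => a*a*(b*b*(2*(sb/(2*c*a))^2 - 1) + c*c*(2*(sc/(2*a*b))^2 - 1)
                - a*a*(2*(sa/(2*b*c))^2 - 1))
            (* ETC trilinears: a(b^2 cos 2B + c^2 cos 2C - a^2 cos 2A) *)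
  | 27 => (c+a)*(a+b) * sb * sc                   (* ETC trilinears: sec A/(b+c) *)
  | 28 => a*(c+a)*(a+b) * sb * sc                 (* ETC trilinears: tan A/(b+c) *)
  | 29 => (b+c-a)*(c+a)*(a+b) * sb * sc           (* ETC trilinears: sec A/(cos B+cos C) *)
  | _ => 0
  end.

Definition ETC (n : nat) (a b c : R) : R * R * R :=
  (etc_first n a b c, etc_first n b c a, etc_first n c a b).

Definition acute_triangle (a b c : R) : Prop :=
  0 < a /\ 0 < b /\ 0 < c /\ a < b + c /\ b < c + a /\ c < a + b /\
  a*a < b*b + c*c /\ b*b < c*c + a*a /\ c*c < a*a + b*b.

(* Atrace(P) = (0 : q : r) for P = (p : q : r); it lies on the extension of BC
   beyond C iff q (q + r) < 0. *)
Definition Atrace (P : R * R * R) : R * R * R :=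
  let '(p, q, r) := P in (0, q, r).

Definition Atrace_beyond_C (P : R * R * R) : Prop :=
  let '(p, q, r) := P in q * (q + r) < 0.

(* Main.v *)
Require Import Defs.
From Stdlib Require Import Reals Lra Lia Psatz.
Open Scope R_scope.

Lemma acute_rot a b c : acute_triangle a b c -> acute_triangle b c a.
Proof. unfold acute_triangle; intros; lra. Qed.

Lemma area_rot a b c : area b c a = area a b c.
Proof. unfold area. f_equal. f_equal. ring. Qed.

Lemma area_facts a b c : acute_triangle a b c ->
  0 < area a b c /\
  16*(area a b c * area a b c) = (a+b+c)*(-a+b+c)*(a-b+c)*(a+b-c).
Proof.
  intros (Ha&Hb&Hc&H1&H2&H3&H4&H5&H6).
  assert (Hs : 0 < (a+b+c)*(-a+b+c)*(a-b+c)*(a+b-c)).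
  { repeat apply Rmult_lt_0_compat; lra. }
  unfold area. split.
  - apply Rdiv_lt_0_compat; [apply sqrt_lt_R0; exact Hs | lra].
  - set (s := (a+b+c)*(-a+b+c)*(a-b+c)*(a+b-c)) in *.
    assert (E : sqrt s * sqrt s = s) by (apply sqrt_sqrt; lra).
    replace (16 * (sqrt s / 4 * (sqrt s / 4))) with (sqrt s * sqrt s) by field.
    exact E.
Qed.

Lemma sqrt3_facts : 0 < sqrt 3 /\ sqrt 3 * sqrt 3 = 3.
Proof.
  split. apply sqrt_lt_R0; lra. apply sqrt_sqrt; lra.
Qed.

Lemma SA_pos a b c : acute_triangle a b c ->
  0 < SA a b c /\ 0 < SA b c a /\ 0 < SA c a b.
Proof. unfold acute_triangle, SA; intros; lra. Qed.

Ltac pos_tac :=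
  repeat (first [ lra | apply Rmult_lt_0_compat | apply Rplus_lt_0_compat
                | apply Rdiv_lt_0_compat | apply pow_lt | apply Rinv_0_lt_compat ]).

Lemma e13 a b c : acute_triangle a b c ->
  2 * etc_first 13 a b c =
  (sqrt 3 * SA b c a + 4 * area a b c) * (sqrt 3 * SA c a b + 4 * area a b c).
Proof.
  intros H. destruct (area_facts a b c H) as [HD0 HD]. destruct sqrt3_facts as [Ht0 Ht].
  cbn [etc_first]. set (t := sqrt 3) in *. set (D := area a b c) in *. unfold SA.
  assert (H1: t*t*((c*c+a*a-b*b)*(a*a+b*b-c*c)) = 3*((c*c+a*a-b*b)*(a*a+b*b-c*c))) by (rewrite Ht; ring).
  lra.
Qed.

Lemma e14 a b c : acute_triangle a b c ->
  2 * etc_first 14 a b c =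
  (sqrt 3 * SA b c a - 4 * area a b c) * (sqrt 3 * SA c a b - 4 * area a b c).
Proof.
  intros H. destruct (area_facts a b c H) as [HD0 HD]. destruct sqrt3_facts as [Ht0 Ht].
  cbn [etc_first]. set (t := sqrt 3) in *. set (D := area a b c) in *. unfold SA.
  assert (H1: t*t*((c*c+a*a-b*b)*(a*a+b*b-c*c)) = 3*((c*c+a*a-b*b)*(a*a+b*b-c*c))) by (rewrite Ht; ring).
  lra.
Qed.

Lemma posN (n : nat) a b c :
  (n = 1 \/ n = 2 \/ n = 3 \/ n = 4 \/ n = 5 \/ n = 6 \/ n = 7 \/ n = 8 \/ n = 9 \/
   n = 10 \/ n = 12 \/ n = 13 \/ n = 15 \/ n = 17 \/ n = 19 \/ n = 21 \/ n = 25 \/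
   n = 27 \/ n = 28 \/ n = 29)%nat ->
  acute_triangle a b c -> 0 < etc_first n a b c.
Proof.
  intros Hn H.
  destruct (area_facts a b c H) as [HD0 HD]. destruct sqrt3_facts as [Ht0 Ht].
  destruct (SA_pos a b c H) as (Sa&Sb&Sc).
  pose proof H as (Ha&Hb&Hc&H1&H2&H3&H4&H5&H6).
  repeat destruct Hn as [Hn|Hn]; subst n.
  12: { pose proof (e13 a b c H). assert (0 < (sqrt 3 * SA b c a + 4 * area a b c) * (sqrt 3 * SA c a b + 4 * area a b c)) by pos_tac. lra. }
  5: { cbn [etc_first].
       assert (0 < SA b c a * SA c a b) by pos_tac.
       assert (0 < a*a*SA a b c) by pos_tac.
       unfold SA in *. lra. }
  all: cbn [etc_first]; pos_tac.
Qed.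

Lemma sq_le u v : 0 <= v -> u*u <= v*v -> u <= v.
Proof. intros. nra. Qed.

Lemma P1 a b c : acute_triangle a b c -> a < b -> b < c ->
  SA c a b * SA c a b <= a*a*(b*b).
Proof.
  intros H Hab Hbc. pose proof H as (Ha&Hb&Hc&H1&H2&H3&H4&H5&H6).
  destruct (SA_pos a b c H) as (Sa&Sb&Sc).
  assert (SA c a b < a*b) by (unfold SA; nra).
  assert (0 < a*b) by nra.
  nra.
Qed.

Lemma P2 a b c : acute_triangle a b c -> a < b -> b < c ->
  3*(a*a*(a*a)) <= (a+b+c)*(-a+b+c)*(a-b+c)*(a+b-c).
Proof.
  intros H Hab Hbc. pose proof H as (Ha&Hb&Hc&H1&H2&H3&H4&H5&H6).
  set (x := a*a). set (y := b*b). set (z := c*c).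
  assert (x < y) by (unfold x, y; nra).
  assert (y < z) by (unfold y, z; nra).
  assert (0 < x) by (unfold x; nra).
  assert (z - y < x) by (unfold x,y,z; lra).
  assert (A1: (z-y)*(z-y) <= x*(z-y)) by nra.
  assert (A2: 0 <= x*(z+y-2*x)) by nra.
  assert (A3: 0 <= x*(y-x)) by nra.
  replace ((a+b+c)*(-a+b+c)*(a-b+c)*(a+b-c)) with (2*(x*y+y*z+z*x) - x*x - y*y - z*z)
    by (unfold x,y,z; ring).
  lra.
Qed.

Lemma s_id a b c : (a+b+c)*(-a+b+c)*(a-b+c)*(a+b-c) = 4*(a*a*(b*b)) - SA c a b * SA c a b.
Proof. unfold SA; ring. Qed.

Lemma key_ineqs a b c : acute_triangle a b c -> a < b -> b < c ->
  sqrt 3 * SA c a b <= 4 * area a b c /\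
  sqrt 3 * (a*a) <= 4 * area a b c /\
  SA c a b <= 4 * sqrt 3 * area a b c /\
  a*a <= 4 * sqrt 3 * area a b c.
Proof.
  intros H Hab Hbc.
  destruct (area_facts a b c H) as [HD0 HD]. destruct sqrt3_facts as [Ht0 Ht].
  pose proof (P1 a b c H Hab Hbc) as Q1. pose proof (P2 a b c H Hab Hbc) as Q2.
  rewrite s_id in HD, Q2.
  set (t := sqrt 3) in *. set (D := area a b c) in *. set (sc := SA c a b) in *.
  assert (0 <= a*a*(a*a)) by nra.
  repeat split; apply sq_le.
  - lra.
  - replace (t*sc*(t*sc)) with ((t*t)*(sc*sc)) by ring. rewrite Ht. lra.
  - lra.
  - replace (t*(a*a)*(t*(a*a))) with ((t*t)*(a*a*(a*a))) by ring. rewrite Ht. lra.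
  - nra.
  - replace (4*t*D*(4*t*D)) with ((t*t)*(16*(D*D))) by ring. rewrite Ht. lra.
  - nra.
  - replace (4*t*D*(4*t*D)) with ((t*t)*(16*(D*D))) by ring. rewrite Ht. lra.
Qed.

Lemma sum_bc a b c : SA b c a + SA c a b = 2*(a*a).
Proof. unfold SA; ring. Qed.

Lemma c14 a b c : acute_triangle a b c -> a < b -> b < c ->
  0 <= etc_first 14 b c a * (etc_first 14 b c a + etc_first 14 c a b).
Proof.
  intros H Hab Hbc.
  pose proof (e14 b c a (acute_rot _ _ _ H)) as Hq.
  pose proof (e14 c a b (acute_rot _ _ _ (acute_rot _ _ _ H))) as Hr.
  rewrite (area_rot a b c) in Hq. rewrite (area_rot b c a), (area_rot a b c) in Hr.
  destruct (key_ineqs a b c H Hab Hbc) as (K1&K2&K3&K4).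
  pose proof (sum_bc a b c) as Hs.
  set (q := etc_first 14 b c a) in *. set (r := etc_first 14 c a b) in *.
  set (t := sqrt 3) in *. set (D := area a b c) in *.
  set (X := t * SA a b c - 4*D) in *. set (Y := t * SA b c a - 4*D) in *.
  set (Z := t * SA c a b - 4*D) in *.
  assert (E : 4*(q*(q+r)) = (X*X)*(Z*(Z+Y))).
  { replace (4*(q*(q+r))) with ((2*q)*((2*q)+(2*r))) by ring. rewrite Hq, Hr. ring. }
  assert (HZ : Z <= 0) by (unfold Z; lra).
  assert (HYZ : Z + Y <= 0).
  { unfold Z, Y. replace (t * SA c a b - 4 * D + (t * SA b c a - 4 * D))
      with (2*(t*(SA b c a + SA c a b)/2 - 4*D)) by field. rewrite Hs.
    replace (t*(2*(a*a))/2) with (t*(a*a)) by field. lra. }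
  assert (0 <= X*X) by nra. assert (0 <= Z*(Z+Y)) by nra.
  assert (0 <= (X*X)*(Z*(Z+Y))) by (apply Rmult_le_pos; auto).
  lra.
Qed.

Lemma c18 a b c : acute_triangle a b c -> a < b -> b < c ->
  0 <= etc_first 18 b c a * (etc_first 18 b c a + etc_first 18 c a b).
Proof.
  intros H Hab Hbc. cbn [etc_first].
  rewrite (area_rot a b c), (area_rot b c a), (area_rot a b c).
  destruct (key_ineqs a b c H Hab Hbc) as (K1&K2&K3&K4).
  pose proof (sum_bc a b c) as Hs.
  set (t := sqrt 3) in *. set (D := area a b c) in *.
  set (X := SA a b c - 4*t*D) in *. set (Y := SA b c a - 4*t*D) in *.
  set (Z := SA c a b - 4*t*D) in *.
  assert (HZ : Z <= 0) by (unfold Z; lra).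
  assert (HYZ : Z + Y <= 0) by (unfold Z, Y; lra).
  replace (Z * X * (Z * X + X * Y)) with ((X*X)*(Z*(Z+Y))) by ring.
  assert (0 <= X*X) by nra. assert (0 <= Z*(Z+Y)) by nra.
  apply Rmult_le_pos; auto.
Qed.

Ltac unpack H := let Ha := fresh in let Hb := fresh in let Hc := fresh in
  let H1 := fresh in let H2 := fresh in let H3 := fresh in let H4 := fresh in
  let H5 := fresh in let H6 := fresh in
  pose proof H as (Ha&Hb&Hc&H1&H2&H3&H4&H5&H6).

Lemma c11 a b c : acute_triangle a b c -> a < b -> b < c ->
  0 <= etc_first 11 b c a * (etc_first 11 b c a + etc_first 11 c a b).
Proof.
  intros H Hab Hbc. unpack H. cbn [etc_first].
  assert (0 < (c-a)^2*(c+a-b)) by (apply Rmult_lt_0_compat; [apply pow_lt|]; lra).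
  assert (0 <= (a-b)^2*(a+b-c)) by (apply Rmult_le_pos; [apply pow2_ge_0|]; lra).
  nra.
Qed.

Lemma c20 a b c : acute_triangle a b c -> a < b -> b < c ->
  0 <= etc_first 20 b c a * (etc_first 20 b c a + etc_first 20 c a b).
Proof.
  intros H Hab Hbc. unpack H. cbn [etc_first].
  destruct (SA_pos a b c H) as (Sa&Sb&Sc).
  assert (SA c a b < SA b c a) by (unfold SA; nra).
  assert (0 < SA b c a * SA c a b) by nra.
  assert (0 < SA a b c * (SA b c a - SA c a b)) by nra.
  set (q := SA b c a * SA c a b + SA b c a * SA a b c - SA c a b * SA a b c).
  assert (0 < q) by (unfold q; nra).
  assert (0 < q + (SA c a b * SA a b c + SA c a b * SA b c a - SA a b c * SA b c a)) by (unfold q; nra).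
  nra.
Qed.

Lemma aux22 x y z : 0 < x -> x < y -> y < z -> z < x + y ->
  0 <= y*(z*z+x*x-y*y) * (y*(z*z+x*x-y*y) + z*(x*x+y*y-z*z)).
Proof.
  intros.
  assert (z*z > y*y) by nra.
  assert (Q: 0 < y*(z*z + x*x - y*y)) by (apply Rmult_lt_0_compat; nra).
  assert (QR: 0 < (y+z)*((x+y-z)*(x+z-y))) by (apply Rmult_lt_0_compat; [|apply Rmult_lt_0_compat]; lra).
  replace (y*(z*z+x*x-y*y) + z*(x*x+y*y-z*z)) with ((y+z)*((x+y-z)*(x+z-y))) by ring.
  nra.
Qed.

Lemma c22 a b c : acute_triangle a b c -> a < b -> b < c ->
  0 <= etc_first 22 b c a * (etc_first 22 b c a + etc_first 22 c a b).
Proof.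
  intros H Hab Hbc. unpack H. cbn [etc_first].
  replace (b*b*(c^4+a^4-b^4)) with ((b*b)*((c*c)*(c*c)+(a*a)*(a*a)-(b*b)*(b*b))) by ring.
  replace (c*c*(a^4+b^4-c^4)) with ((c*c)*((a*a)*(a*a)+(b*b)*(b*b)-(c*c)*(c*c))) by ring.
  apply aux22; nra.
Qed.

Lemma c24 a b c : acute_triangle a b c -> a < b -> b < c ->
  0 <= etc_first 24 b c a * (etc_first 24 b c a + etc_first 24 c a b).
Proof.
  intros H Hab Hbc. unpack H. cbn [etc_first].
  destruct (SA_pos a b c H) as (Sa&Sb&Sc).
  assert (B1 : SA b c a * SA b c a < 2*(c*c)*(a*a)).
  { assert (SA b c a < 2*(a*a)) by (unfold SA; lra).
    assert (SA b c a < c*c) by (unfold SA; nra).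
    nra. }
  assert (B2 : SA c a b * SA c a b < 2*(a*a)*(b*b)).
  { assert (SA c a b < a*a) by (unfold SA; nra).
    assert (SA c a b < b*b) by (unfold SA; nra).
    assert (0 < a*a) by nra.
    nra. }
  assert (Hq : b*b*(SA b c a * SA b c a - 2*c*c*(a*a)) * SA c a b * SA a b c < 0).
  { assert (0 < b*b) by nra.
    assert (SA b c a * SA b c a - 2*c*c*(a*a) < 0) by lra.
    assert (0 < SA c a b * SA a b c) by nra.
    assert (b*b*(SA b c a * SA b c a - 2*c*c*(a*a)) < 0) by nra.
    nra. }
  assert (Hr : c*c*(SA c a b * SA c a b - 2*a*a*(b*b)) * SA a b c * SA b c a < 0).
  { assert (0 < c*c) by nra.
    assert (SA c a b * SA c a b - 2*a*a*(b*b) < 0) by lra.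
    assert (0 < SA a b c * SA b c a) by nra.
    assert (c*c*(SA c a b * SA c a b - 2*a*a*(b*b)) < 0) by nra.
    nra. }
  nra.
Qed.

Lemma w23 : Atrace_beyond_C (ETC 23 4 5 6).
Proof. unfold Atrace_beyond_C, ETC. cbn [etc_first]. lra. Qed.

Lemma w26 : Atrace_beyond_C (ETC 26 4 5 6).
Proof. unfold Atrace_beyond_C, ETC. cbn [etc_first]. unfold SA. lra. Qed.

Lemma w16 : Atrace_beyond_C (ETC 16 13 14 15).
Proof.
  unfold Atrace_beyond_C, ETC. cbn [etc_first].
  assert (A1 : area 14 15 13 = 84).
  { unfold area.
    replace ((14 + 15 + 13) * (- (14) + 15 + 13) * (14 - 15 + 13) * (14 + 15 - 13)) with (336*336) by lra.
    rewrite sqrt_square by lra. lra. }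
  assert (A2 : area 15 13 14 = 84).
  { unfold area.
    replace ((15 + 13 + 14) * (- (15) + 13 + 14) * (15 - 13 + 14) * (15 + 13 - 14)) with (336*336) by lra.
    rewrite sqrt_square by lra. lra. }
  rewrite A1, A2. unfold SA.
  destruct sqrt3_facts as [Ht0 Ht]. set (t := sqrt 3) in *.
  assert (1.7 < t) by nra. assert (t < 1.8) by nra.
  assert (0 < 14 * 14 * (t * (15 * 15 + 13 * 13 - 14 * 14) - 4 * 84)) by lra.
  assert (14 * 14 * (t * (15 * 15 + 13 * 13 - 14 * 14) - 4 * 84) + 15 * 15 * (t * (13 * 13 + 14 * 14 - 15 * 15) - 4 * 84) < 0) by lra.
  nra.
Qed.

Lemma pp q r : 0 < q -> 0 < r -> 0 <= q * (q + r).
Proof. intros. nra. Qed.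

Theorem theorem6p10 :
  (forall n : nat, (n = 16 \/ n = 23 \/ n = 26)%nat ->
     exists a b c : R, acute_triangle a b c /\ a < b < c /\
       Atrace_beyond_C (ETC n a b c)) /\
  (forall n : nat, (1 <= n <= 29)%nat -> ~ (n = 16 \/ n = 23 \/ n = 26)%nat ->
     forall a b c : R, acute_triangle a b c -> a < b < c ->
       ~ Atrace_beyond_C (ETC n a b c)).
Proof.
  split.
  - intros n [ -> | [ -> | -> ] ].
    + exists 13, 14, 15. split; [unfold acute_triangle; lra|]. split; [lra|]. exact w16.
    + exists 4, 5, 6. split; [unfold acute_triangle; lra|]. split; [lra|]. exact w23.
    + exists 4, 5, 6. split; [unfold acute_triangle; lra|]. split; [lra|]. exact w26.
  - intros n Hn Hne a b c H [Hab Hbc].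
    unfold Atrace_beyond_C, ETC. apply Rle_not_lt.
    assert (Hc : (n = 11 \/ n = 14 \/ n = 18 \/ n = 20 \/ n = 22 \/ n = 24 \/
      (n = 1 \/ n = 2 \/ n = 3 \/ n = 4 \/ n = 5 \/ n = 6 \/ n = 7 \/ n = 8 \/ n = 9 \/
       n = 10 \/ n = 12 \/ n = 13 \/ n = 15 \/ n = 17 \/ n = 19 \/ n = 21 \/ n = 25 \/
       n = 27 \/ n = 28 \/ n = 29))%nat) by lia.
    destruct Hc as [ -> | [ -> | [ -> | [ -> | [ -> | [ -> | Hp ] ] ] ] ] ].
    + apply c11; auto.
    + apply c14; auto.
    + apply c18; auto.
    + apply c20; auto.
    + apply c22; auto.
    + apply c24; auto.
    + apply pp; apply posN; auto using acute_rot.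
Qed.
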